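(* The order-preserving map $\psi:T_K(V)\to T_{O_K}(\Lambda)$, $W\mapsto W\cap\Lambda$, induces a homotopy equivalence of the order complexes (geometric realizations) $T_K(V)^\bullet\simeq T_{O_K}(\Lambda)^\bullet$.
   Context: $K$ finite over $\mathbb Q_p$, $O_K$ its integers, $\pi$ a uniformizer, $V=K^{d+1}$, $\Lambda=\bigoplus_{i=0}^dO_Ke_i$. $T_K(V)$ is the poset (under inclusion) of $K$-subspaces $0\neq W\subsetneq V$ (the Tits building of $\mathrm{GL}(V)$). $T_{O_K}(\Lambda)$ is the poset (under inclusion) of $O_K$-submodules $U\subset\Lambda$ with $U\not\subset\pi\Lambda$ (i.e. $\dim_{O_K/\pi}(U+\pi\Lambda)/\pi\Lambda\ge1$) which can be generated by at most $d$ elements. For a poset $X$, the order complex $X^\bullet$ has as $n$-simplices chains $x_0\prec\cdots\prec x_n$. *)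

(* Defs.v *)
From HB Require Import structures.
From mathcomp Require Import all_boot all_order all_algebra.
From mathcomp Require Import boolp classical_sets.
From mathcomp Require Import Rstruct.
Set Implicit Arguments. Unset Strict Implicit. Unset Printing Implicit Defensive.
Import Order.TTheory GRing.Theory Num.Theory.
Local Open Scope ring_scope.
Local Open Scope classical_set_scope.
Notation R := Rdefinitions.R.

(* The value v 0 is irrelevant (never used).                          *)

Definition discrete_valuation (K : fieldType) (v : K -> int) : Prop :=
  [/\ (forall x y : K, x != 0 -> y != 0 -> v (x * y) = v x + v y),
      (forall x y : K, x != 0 -> y != 0 -> x + y != 0 ->
          Num.min (v x) (v y) <= v (x + y))
    & (exists p : K, p != 0 /\ v p = 1)].

(* x lies in pi^n O_K *)
Definition vsmall (K : fieldType) (v : K -> int) (n : int) (x : K) : Prop :=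
  x = 0 \/ n <= v x.

Definition in_O (K : fieldType) (v : K -> int) (x : K) : Prop := vsmall v 0 x.

Definition v_complete (K : fieldType) (v : K -> int) : Prop :=
  forall a : nat -> K,
    (forall n : int, exists M : nat, forall i j : nat, (M <= i)%N -> (M <= j)%N ->
        vsmall v n (a i - a j)) ->
    exists L : K, forall n : int, exists M : nat, forall i : nat, (M <= i)%N ->
        vsmall v n (a i - L).

Definition finite_residue_field (K : fieldType) (v : K -> int) : Prop :=
  exists r : seq K, forall x : K, in_O v x ->
    exists y : K, [/\ y \in r, in_O v y & vsmall v 1 (x - y)].

Definition char0 (K : fieldType) : Prop := forall n : nat, (0 < n)%N -> n%:R != 0 :> K.

(* K is a finite extension of Q_p (for some prime p), v its normalized valuation:
   equivalently, a complete discretely valued field of characteristic 0 with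
   finite residue field. *)
Definition p_adic_field (K : fieldType) (v : K -> int) : Prop :=
  [/\ discrete_valuation v, v_complete v, finite_residue_field v & char0 K].

(* Lambda = (+)_i O_K e_i inside V = K^{d+1} (row vectors) *)
Definition Lattice (K : fieldType) (v : K -> int) (d : nat) : set 'rV[K]_d.+1 :=
  fun x => forall i, in_O v (x 0 i).
Arguments Lattice {K} v d.

Definition K_subspace (K : fieldType) (d : nat) (W : set 'rV[K]_d.+1) : Prop :=
  [/\ W 0, (forall x y, W x -> W y -> W (x + y)) & (forall (a : K) x, W x -> W (a *: x))].

Definition TK (K : fieldType) (d : nat) : set (set 'rV[K]_d.+1) :=
  fun W => [/\ K_subspace W, (exists w, W w /\ w != 0) & (exists x, ~ W x)].

Definition O_submodule (K : fieldType) (v : K -> int) (d : nat) (U : set 'rV[K]_d.+1) : Prop :=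
  [/\ U 0, (forall x y, U x -> U y -> U (x + y))
    & (forall (a : K) x, in_O v a -> U x -> U (a *: x))].

(* U is generated over O_K by (at most) d elements: d generators, zeros allowed *)
Definition generated_by_d (K : fieldType) (v : K -> int) (d : nat) (U : set 'rV[K]_d.+1) : Prop :=
  exists g : 'I_d -> 'rV[K]_d.+1,
    U = fun u => exists a : 'I_d -> K, (forall i, in_O v (a i)) /\ u = \sum_(i < d) a i *: g i.

Definition TO (K : fieldType) (v : K -> int) (pi : K) (d : nat) : set (set 'rV[K]_d.+1) :=
  fun U => [/\ O_submodule v U, U `<=` Lattice v d,
               ~ (U `<=` (fun u => exists w, Lattice v d w /\ u = pi *: w))
             & generated_by_d v U].

Definition psi (K : fieldType) (v : K -> int) (d : nat) (W : set 'rV[K]_d.+1) : set 'rV[K]_d.+1 :=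
  W `&` Lattice v d.

(* Geometric realization of the order complex of a poset (C, le),     *)
(* C a carrier predicate on an ambient type P, with the weak topology. *)
(* A bary is a function P -> R (barycentric coordinates).            *)

Definition simplex (n : nat) : set ('I_n.+1 -> R) :=
  fun l => (forall i, 0 <= l i) /\ \sum_(i < n.+1) l i = 1.
Arguments simplex : clear implicits.

(* (possibly degenerate) chain c 0 <= c 1 <= ... <= c n in C *)
Definition chain_in (P : Type) (C : set P) (le : P -> P -> Prop) (n : nat)
    (c : 'I_n.+1 -> P) : Prop :=
  (forall i, C (c i)) /\ (forall i j : 'I_n.+1, (i <= j)%N -> le (c i) (c j)).

Definition bary (P : Type) (n : nat) (c : 'I_n.+1 -> P) (l : 'I_n.+1 -> R) : P -> R :=
  fun x => \sum_(i < n.+1) (if `[< c i = x >] then l i else 0).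

Definition realization (P : Type) (C : set P) (le : P -> P -> Prop) : set (P -> R) :=
  fun t => exists n (c : 'I_n.+1 -> P) (l : 'I_n.+1 -> R),
    [/\ chain_in C le c, simplex n l & t = bary c l].

Definition rel_open_simplex (n : nat) (A : set ('I_n.+1 -> R)) : Prop :=
  forall l, A l -> exists2 e : R, 0 < e &
    forall m, simplex n m -> (forall i, `|m i - l i| < e) -> A m.

Definition weak_open (P : Type) (C : set P) (le : P -> P -> Prop) (U : set (P -> R)) : Prop :=
  U `<=` realization C le /\
  forall n (c : 'I_n.+1 -> P), chain_in C le c ->
    rel_open_simplex (fun l => simplex n l /\ U (bary c l)).

(* open subsets of [0,1] x |X| in the product topology *)
Definition prod_open (P : Type) (C : set P) (le : P -> P -> Prop)
    (U : R -> (P -> R) -> Prop) : Prop :=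
  (forall s t, U s t -> (0 <= s <= 1) /\ realization C le t) /\
  forall s t, U s t -> exists2 e : R, 0 < e & exists O : set (P -> R),
    [/\ weak_open C le O, O t &
        forall s' t', 0 <= s' <= 1 -> `|s' - s| < e -> O t' -> U s' t'].

Definition real_cont (P Q : Type) (CP : set P) (leP : P -> P -> Prop)
    (CQ : set Q) (leQ : Q -> Q -> Prop) (f : (P -> R) -> (Q -> R)) : Prop :=
  (forall t, realization CP leP t -> realization CQ leQ (f t)) /\
  forall V, weak_open CQ leQ V ->
    weak_open CP leP (fun t => realization CP leP t /\ V (f t)).

Definition homotopy_cont (P Q : Type) (CP : set P) (leP : P -> P -> Prop)
    (CQ : set Q) (leQ : Q -> Q -> Prop) (H : R -> (P -> R) -> (Q -> R)) : Prop :=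
  (forall s t, 0 <= s <= 1 -> realization CP leP t -> realization CQ leQ (H s t)) /\
  forall V, weak_open CQ leQ V ->
    prod_open CP leP (fun s t => [/\ 0 <= s <= 1, realization CP leP t & V (H s t)]).

Definition homotopic (P Q : Type) (CP : set P) (leP : P -> P -> Prop)
    (CQ : set Q) (leQ : Q -> Q -> Prop) (f g : (P -> R) -> (Q -> R)) : Prop :=
  exists H, homotopy_cont CP leP CQ leQ H /\
    forall t, realization CP leP t -> H 0 t = f t /\ H 1 t = g t.

Definition homotopy_equivalence (P Q : Type) (CP : set P) (leP : P -> P -> Prop)
    (CQ : set Q) (leQ : Q -> Q -> Prop) (f : (P -> R) -> (Q -> R)) : Prop :=
  real_cont CP leP CQ leQ f /\
  exists g : (Q -> R) -> (P -> R),
    [/\ real_cont CQ leQ CP leP g,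
        homotopic CP leP CP leP (g \o f) id
      & homotopic CQ leQ CQ leQ (f \o g) id].

Definition incl (T : Type) (A B : set T) : Prop := A `<=` B.
Arguments TK : clear implicits.
Arguments TO {K} v pi d.

(* Main.v *)
Require Import Defs.
From HB Require Import structures.
From mathcomp Require Import all_boot all_order all_algebra.
From mathcomp Require Import boolp classical_sets reals.
From mathcomp Require Import Rstruct.
From mathcomp.algebra_tactics Require Import ring lra.
From mathcomp Require Import zify.
Set Implicit Arguments. Unset Strict Implicit. Unset Printing Implicit Defensive.
Import Order.TTheory GRing.Theory Num.Theory.
Local Open Scope ring_scope.
Local Open Scope classical_set_scope.

Section Transfer.
Variable P : Type.

Lemma sumZ (I : finType) (f : I -> P) (e : I -> R) :
  (forall i, \sum_(j | `[< f j = f i >]) e j = 0) ->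
  forall S : {set I}, (forall i j, i \in S -> f j = f i -> j \in S) ->
  \sum_(j in S) e j = 0.
Proof.
move=> H S; have [n] := ubnP #|S|; elim: n S => [|n IH] S.
  by rewrite ltn0.
move=> Hn Hcl.
have [S0|[i iS]] := set_0Vmem S; first by rewrite S0 big_set0.
pose S1 := finset (fun j => `[< f j = f i >]).
rewrite (big_setID S1) /=.
have -> : \sum_(i0 in S :&: S1) e i0 = 0.
  rewrite -[RHS](H i); apply: eq_bigl => j; rewrite !inE.
  case: asboolP => fj; rewrite ?andbT ?andbF //; exact: (Hcl i).
rewrite add0r; apply: IH.
  apply: (@leq_trans #|S|); last by rewrite -ltnS.
  apply: proper_card; apply/properP; split.
    exact: subsetDl.
  by exists i => //; rewrite !inE asboolT // andbF.
move=> a b; rewrite !inE => /andP[aS1 aS] fba; apply/andP; split.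
  by move: aS1; apply: contra => /asboolP fbi; apply/asboolP; rewrite -fba.
exact: (Hcl a).
Qed.

Lemma sumZA (I : finType) (f : I -> P) (e : I -> R) :
  (forall i, \sum_(j | `[< f j = f i >]) e j = 0) ->
  forall A : set P, \sum_(j | `[< A (f j) >]) e j = 0.
Proof.
move=> H A; rewrite -[RHS](sumZ H (S := finset (fun j => `[< A (f j) >]))).
  by apply: eq_bigl => j; rewrite inE.
by move=> i j; rewrite !inE => /asboolP Ai fji; apply/asboolP; rewrite fji.
Qed.

Lemma transfer (I J : finType) (f : I -> P) (g : J -> P) (e : I -> R) (e' : J -> R) :
  (forall y, \sum_(i | `[< f i = y >]) e i = \sum_(j | `[< g j = y >]) e' j) ->
  forall A : set P, \sum_(i | `[< A (f i) >]) e i = \sum_(j | `[< A (g j) >]) e' j.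
Proof.
move=> H A.
pose h (k : I + J) := match k with inl i => f i | inr j => g j end.
pose w (k : I + J) := match k with inl i => e i | inr j => - e' j end.
have Z := @sumZA _ h w.
have Hs : forall (Q : set P), \sum_(k | `[< Q (h k) >]) w k =
   \sum_(i | `[< Q (f i) >]) e i - \sum_(j | `[< Q (g j) >]) e' j.
  move=> Q; rewrite big_sumType /= sumrN //.
have HZ : \sum_(k | `[< A (h k) >]) w k = 0.
  by apply: Z => k; have := Hs (fun y => y = h k); rewrite /= => ->; rewrite H subrr.
by move: HZ; rewrite Hs => /eqP; rewrite subr_eq0 => /eqP.
Qed.

End Transfer.

Lemma baryE (P : Type) n (c : 'I_n.+1 -> P) l x :
  bary c l x = \sum_(i | `[< c i = x >]) l i.
Proof. by rewrite /bary [RHS]big_mkcond. Qed.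

Lemma bary_transfer (P : Type) n m (c : 'I_n.+1 -> P) l (c' : 'I_m.+1 -> P) l' :
  bary c l = bary c' l' -> forall A : set P,
  \sum_(i | `[< A (c i) >]) l i = \sum_(j | `[< A (c' j) >]) l' j.
Proof.
move=> E A; apply: transfer => y; by rewrite -!baryE E.
Qed.

Definition pf (P Q : Type) (phi : P -> Q) (t : P -> R) : Q -> R :=
  fun x => xget 0 (fun r => exists n (c : 'I_n.+1 -> P) (l : 'I_n.+1 -> R),
                      t = bary c l /\ r = bary (phi \o c) l x).

Lemma pf_bary (P Q : Type) (phi : P -> Q) n (c : 'I_n.+1 -> P) l :
  pf phi (bary c l) = bary (phi \o c) l.
Proof.
apply: funext => x; apply: xget_unique; first by exists n, c, l.
move=> r [m [c' [l' [E ->]]]].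
rewrite !baryE /=.
exact: (bary_transfer (esym E) (fun y => phi y = x)).
Qed.

Lemma induced_real_cont (P Q : Type) (CP : set P) leP (CQ : set Q) leQ (phi : P -> Q) :
  (forall n (c : 'I_n.+1 -> P), chain_in CP leP c -> chain_in CQ leQ (phi \o c)) ->
  real_cont CP leP CQ leQ (pf phi).
Proof.
move=> Hch; split.
  move=> t [n [c [l [ch sl ->]]]]; rewrite pf_bary.
  by exists n, (phi \o c), l; split => //; apply: Hch.
move=> V [Vsub Vop]; split; first by move=> t [].
move=> n c ch l [sl [_ Vl]].
have [|e e0 He] := Vop n (phi \o c) (Hch _ _ ch) l; first by split => //; rewrite -pf_bary.
exists e => // m sm dm; split => //; split; first by exists n, c, m.
by rewrite pf_bary; case: (He m sm dm).
Qed.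

Definition clamp (w z : R) : R := if z <= 0 then 0 else if w <= z then w else z.

Ltac clamp_cases := rewrite /clamp; repeat match goal with
  |- context[if ?a <= ?b then _ else _] => case: (leP a b) => ? end.

Lemma clamp_key (S w v : R) : 0 <= S -> 0 <= w ->
  clamp S v + clamp w (v - S) = clamp (S + w) v.
Proof.
move=> hS hw; clamp_cases; lra.
Qed.

Lemma clamp_ge0 w z : 0 <= w -> 0 <= clamp w z.
Proof. by move=> hw; clamp_cases; lra. Qed.

Lemma clamp_le w z : 0 <= w -> clamp w z <= w.
Proof. by move=> ?; clamp_cases; lra. Qed.

Lemma clamp_lip w z w' z' : 0 <= w -> 0 <= w' ->
  `|clamp w z - clamp w' z'| <= `|w - w'| + `|z - z'|.
Proof.
move=> ? ?; have h1 := ler_norm (w - w'); have h2 := ler_norm (w' - w); rewrite distrC in h2.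
have h3 := ler_norm (z - z'); have h4 := ler_norm (z' - z); rewrite distrC in h4.
rewrite ler_norml; apply/andP; split; clamp_cases; lra.
Qed.

Lemma telescope_c (N : nat) (Q : pred nat) (w : nat -> R) v : (forall i, 0 <= w i) ->
 \sum_(0 <= i < N) (if Q i then clamp (w i) (v - \sum_(0 <= j < i) (if Q j then w j else 0)) else 0)
   = clamp (\sum_(0 <= i < N) (if Q i then w i else 0)) v.
Proof.
move=> w0; elim: N => [|N IH].
  by rewrite !big_geq //; clamp_cases; lra.
rewrite !big_nat_recr //= IH.
case: (Q N); last by rewrite !addr0.
rewrite clamp_key //; apply: sumr_ge0 => i _; case: (Q i) => //.
Qed.

Lemma telescope (N : nat) (Q : pred nat) (w : nat -> R) v : (forall i, 0 <= w i) ->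
 \sum_(0 <= i < N | Q i) clamp (w i) (v - \sum_(0 <= j < i | Q j) w j)
   = clamp (\sum_(0 <= i < N | Q i) w i) v.
Proof.
move=> w0; rewrite [in RHS]big_mkcond -(telescope_c _ _ _ w0) big_mkcond.
by apply: eq_bigr => i _; rewrite big_mkcond.
Qed.

Lemma telescope_ord n (Q : pred 'I_n.+1) (l : 'I_n.+1 -> R) (v : R) : (forall i, 0 <= l i) ->
  \sum_(i | Q i) clamp (l i) (v - \sum_(j : 'I_n.+1 | (j < i)%N && Q j) l j)
    = clamp (\sum_(i | Q i) l i) v.
Proof.
move=> l0.
pose w (k : nat) := l (inord k); pose Q' (k : nat) := Q (inord k).
have w0 : forall k, 0 <= w k by move=> k; exact: l0.
have E1 : \sum_(i | Q i) l i = \sum_(0 <= k < n.+1 | Q' k) w k.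
  rewrite big_mkord; apply: eq_big => i; by rewrite /Q' /w inord_val.
rewrite E1 -(telescope _ _ _ w0) big_mkord; apply: eq_big => [i|i _].
  by rewrite /Q' inord_val.
rewrite /w inord_val; congr (clamp _ (_ - _)).
rewrite (big_nat_widen _ _ n.+1); last exact: ltnW (ltn_ord i).
rewrite big_mkord; apply: eq_big => [j|j _]; by rewrite /Q' ?inord_val // andbC.
Qed.

Definition LmN n (l : 'I_n.+1 -> R) (i : nat) := \sum_(j < n.+1 | (j < i)%N) l j.
Definition aw n (l : 'I_n.+1 -> R) (s : R) (i : 'I_n.+1) := clamp (l i) (s - LmN l i).
Definition bw n (l : 'I_n.+1 -> R) (s : R) (i : 'I_n.+1) := l i - aw l s i.

Section Group.
Variables (P : Type) (le : P -> P -> Prop).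
Hypothesis le_anti : forall x y, le x y -> le y x -> x = y.

Lemma group_a n (c : 'I_n.+1 -> P) (l : 'I_n.+1 -> R) s y :
  (forall i j : 'I_n.+1, (i <= j)%N -> le (c i) (c j)) -> (forall i, 0 <= l i) ->
  \sum_(i | `[< c i = y >]) aw l s i =
  clamp (\sum_(i | `[< c i = y >]) l i) (s - \sum_(i | `[< c i <> y /\ le (c i) y >]) l i).
Proof.
move=> ch l0.
set M := \sum_(i | `[< c i <> y /\ le (c i) y >]) l i.
have St : forall i, c i = y ->
    LmN l i = M + \sum_(j : 'I_n.+1 | (j < i)%N && `[< c j = y >]) l j.
  move=> i ci; rewrite /LmN (bigID (fun j => `[< c j = y >])) /= addrC; congr (_ + _).
  apply: eq_bigl => j; apply/idP/idP.
    move=> /andP[ji /asboolPn cj]; apply/asboolP; split => //.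
    rewrite -ci; apply: ch; exact: ltnW.
  move=> /asboolP [cj lej]; apply/andP; split; last by apply/asboolPn.
  rewrite ltnNge; apply/negP => ij; apply: cj; apply: le_anti => //.
  by rewrite -ci; apply: ch.
rewrite -telescope_ord //; apply: eq_bigr => i /asboolP ci.
by rewrite /aw (St i ci) opprD addrA.
Qed.

End Group.

Section HomAlg.
Variables (P : Type) (C : set P) (le : P -> P -> Prop).
Hypothesis le_anti : forall x y, le x y -> le y x -> x = y.
Hypothesis le_trans : forall x y z, le x y -> le y z -> le x z.
Variable h : P -> P.
Hypothesis hC : forall x, C x -> C (h x).
Hypothesis hmono : forall x y, C x -> C y -> le x y -> le (h x) (h y).
Hypothesis hup : forall x, C x -> le x (h x).

Definition Hform s n (c : 'I_n.+1 -> P) (l : 'I_n.+1 -> R) : P -> R :=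
  fun x => bary c (aw l s) x + bary (h \o c) (bw l s) x.

Lemma Hform_inv s n m (c : 'I_n.+1 -> P) l (c' : 'I_m.+1 -> P) l' :
  (forall i j : 'I_n.+1, (i <= j)%N -> le (c i) (c j)) ->
  (forall i j : 'I_m.+1, (i <= j)%N -> le (c' i) (c' j)) ->
  (forall i, 0 <= l i) -> (forall i, 0 <= l' i) ->
  bary c l = bary c' l' -> Hform s c l = Hform s c' l'.
Proof.
move=> ch ch' l0 l0' E.
have Ga : forall y, \sum_(i | `[< c i = y >]) aw l s i = \sum_(j | `[< c' j = y >]) aw l' s j.
  move=> y; rewrite (group_a le_anti) // (group_a le_anti) //.
  congr (clamp _ (_ - _)).
    exact: (bary_transfer E (fun z => z = y)).
  exact: (bary_transfer E (fun z => z <> y /\ le z y)).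
apply: funext => x; rewrite /Hform !baryE /bw /=.
rewrite !sumrB.
congr (_ + (_ - _)).
- exact: Ga.
- exact: (bary_transfer E (fun z => h z = x)).
- exact: (transfer Ga (fun z => h z = x)).
Qed.

Definition Homt (s : R) (t : P -> R) : P -> R :=
  fun x => xget 0 (fun r => exists n (c : 'I_n.+1 -> P) (l : 'I_n.+1 -> R),
     [/\ chain_in C le c, simplex n l, t = bary c l & r = Hform s c l x]).

Lemma Hom_bary s n (c : 'I_n.+1 -> P) l : chain_in C le c -> simplex n l ->
  Homt s (bary c l) = Hform s c l.
Proof.
move=> ch sl; apply: funext => x; apply: xget_unique; first by exists n, c, l.
move=> r [m [c' [l' [ch' sl' E ->]]]].
rewrite (@Hform_inv s m n c' l' c l) //.
- by case: ch'.
- by case: ch.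
- by case: sl'.
- by case: sl.
Qed.

End HomAlg.

Section LmNfacts.
Variables (n : nat) (l : 'I_n.+1 -> R).
Hypothesis l0 : forall i, 0 <= l i.

Lemma LmN_ge0 k : 0 <= LmN l k.
Proof. by apply: sumr_ge0. Qed.

Lemma LmN0 : LmN l 0 = 0.
Proof. by rewrite /LmN big_pred0. Qed.

Lemma LmN_S k : (k < n.+1)%N -> LmN l k.+1 = LmN l k + l (inord k).
Proof.
move=> kn; rewrite /LmN (bigD1 (inord k)) /=; last by rewrite inordK.
rewrite addrC; congr (_ + _); apply: eq_bigl => j.
rewrite ltnS; case: (eqVneq j (inord k)) => [->|jk]; first by rewrite inordK // ltnn andbF.
have jk' : (j : nat) != k.
  by apply: contra jk => /eqP E; apply/eqP/val_inj; rewrite /= inordK.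
by rewrite andbT ltn_neqAle jk'.
Qed.

Lemma LmN_full : LmN l n.+1 = \sum_j l j.
Proof. by rewrite /LmN; apply: eq_bigl => j; rewrite ltn_ord. Qed.

Lemma LmN_mono k k' : (k <= k')%N -> LmN l k <= LmN l k'.
Proof.
move=> kk; rewrite /LmN [X in _ <= X](bigID (fun j : 'I_n.+1 => (j < k)%N)) /=.
have -> : \sum_(i < n.+1 | (i < k')%N && (i < k)%N) l i = \sum_(i < n.+1 | (i < k)%N) l i.
  apply: eq_bigl => j; case: (ltnP j k) => jk; rewrite ?andbT ?andbF //.
  exact: leq_trans jk kk.
by rewrite lerDl sumr_ge0.
Qed.

End LmNfacts.

Lemma LmN_lip n (l m : 'I_n.+1 -> R) k :
  `|LmN m k - LmN l k| <= \sum_j `|m j - l j|.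
Proof.
rewrite /LmN -sumrB; apply: le_trans (ler_norm_sum _ _ _) _.
rewrite [X in _ <= X](bigID (fun j : 'I_n.+1 => (j < k)%N)) /= lerDl.
by apply: sumr_ge0.
Qed.

Definition valid n (l : 'I_n.+1 -> R) (s : R) (k : 'I_n.+1) :=
  LmN l k <= s /\ s <= LmN l k + l k.

Lemma aw_after n (l : 'I_n.+1 -> R) s (k i : 'I_n.+1) : (forall j, 0 <= l j) ->
  valid l s k -> (k < i)%N -> aw l s i = 0.
Proof.
move=> l0 [v1 v2] ki; rewrite /aw.
have : LmN l k.+1 <= LmN l i by apply: LmN_mono.
rewrite LmN_S ?ltn_ord // inord_val => H.
clamp_cases; lra.
Qed.

Lemma aw_before n (l : 'I_n.+1 -> R) s (k i : 'I_n.+1) : (forall j, 0 <= l j) ->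
  valid l s k -> (i < k)%N -> aw l s i = l i.
Proof.
move=> l0 [v1 v2] ik; rewrite /aw.
have : LmN l i.+1 <= LmN l k by apply: LmN_mono.
rewrite LmN_S ?ltn_ord // inord_val => H.
have := l0 i; move=> ?; clamp_cases; lra.
Qed.

Lemma aw_s0 n (l : 'I_n.+1 -> R) i : (forall j, 0 <= l j) -> aw l 0 i = 0.
Proof.
move=> l0; rewrite /aw; have := LmN_ge0 l0 i; move=> ?.
have := l0 i; move=> ?; clamp_cases; lra.
Qed.

Lemma aw_s1 n (l : 'I_n.+1 -> R) i : simplex n l -> aw l 1 i = l i.
Proof.
move=> [l0 s1]; rewrite /aw.
have : LmN l i.+1 <= LmN l n.+1 by apply: (LmN_mono l0); exact: ltn_ord.
rewrite LmN_S ?ltn_ord // inord_val LmN_full s1 => H.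
have := l0 i; move=> ?; clamp_cases; lra.
Qed.

Lemma valid_exists n (l : 'I_n.+1 -> R) s : simplex n l -> 0 <= s <= 1 ->
  exists k, valid l s k.
Proof.
move=> [l0 sl] /andP[s0 s1].
apply: contrapT => Hn.
have Hk : forall k, (k <= n.+1)%N -> LmN l k <= s.
  elim => [|k IH] kn; first by rewrite LmN0.
  have kn' : (k < n.+1)%N by [].
  rewrite LmN_S //; have := IH (ltnW kn); move=> Hle.
  apply: contrapT => Hgt; apply: Hn; exists (inord k); split.
    by rewrite inordK.
  rewrite inordK //; lra.
have := Hk n (leqnSn _); rewrite /=.
have E := LmN_S l (ltnSn n); rewrite LmN_full sl in E.
move=> Hle; apply: Hn; exists ord_max; split; rewrite /= //.
have : inord n = ord_max :> 'I_n.+1 by apply: val_inj; rewrite /= inordK.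
move=> Ei; rewrite Ei in E; lra.
Qed.

Lemma split_lshift m n (i : 'I_m) : split (lshift n i) = inl i.
Proof. exact: (unsplitK (inl i)). Qed.
Lemma split_rshift m n (i : 'I_n) : split (rshift m i) = inr i.
Proof. exact: (unsplitK (inr i)). Qed.

Definition wk n (l : 'I_n.+1 -> R) s : 'I_(n.+1 + n.+1) -> R :=
  fun j => match split j with inl i => aw l s i | inr i => bw l s i end.

Lemma wk_simplex n (l : 'I_n.+1 -> R) s : simplex n l -> simplex (n + n.+1) (wk l s).
Proof.
move=> [l0 sl]; split.
  move=> j; rewrite /wk; case: split => i; rewrite /aw /bw.
    exact: clamp_ge0.
  by rewrite subr_ge0; apply: clamp_le.
rewrite -sl; change (\sum_(i < n.+1 + n.+1) wk l s i = \sum_i l i).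
rewrite /bary big_split_ord /=.
under eq_bigr do rewrite /wk split_lshift.
under [X in _ + X]eq_bigr do rewrite /wk split_rshift.
by rewrite -big_split /=; apply: eq_bigr => i _; rewrite /bw addrC subrK.
Qed.

Section HomGeo.
Variables (P : Type) (C : set P) (le : P -> P -> Prop).
Hypothesis le_anti : forall x y, le x y -> le y x -> x = y.
Hypothesis le_trans : forall x y z, le x y -> le y z -> le x z.
Variable h : P -> P.
Hypothesis hC : forall x, C x -> C (h x).
Hypothesis hmono : forall x y, C x -> C y -> le x y -> le (h x) (h y).
Hypothesis hup : forall x, C x -> le x (h x).

Definition dk n (c : 'I_n.+1 -> P) (k : 'I_n.+1) : 'I_(n.+1 + n.+1) -> P :=
  fun j => match split j with
           | inl i => c (if (i <= k)%N then i else k)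
           | inr i => h (c (if (k <= i)%N then i else k)) end.

Lemma dk_chain n (c : 'I_n.+1 -> P) k : chain_in C le c -> chain_in C le (dk c k).
Proof.
move=> [cC ch]; split.
  by move=> j; rewrite /dk; case: split => i; [|apply: hC]; apply: cC.
move=> j1 j2; rewrite /dk; case: splitP => i1 E1; case: splitP => i2 E2; rewrite E1 E2 => j12.
- apply: ch; case: (leqP i1 k) => h1; case: (leqP i2 k) => h2; lia.
- apply: (@le_trans _ (c k)).
    by apply: ch; case: (leqP i1 k) => h1; lia.
  apply: (le_trans (hup (cC k))); apply: hmono; try exact: cC.
  by apply: ch; case: (leqP k i2) => h1; lia.
- by move: j12; rewrite leqNgt ltn_addr.
- apply: hmono; try exact: cC; apply: ch.
  rewrite leq_add2l in j12.
  case: (leqP k i1) => h1; case: (leqP k i2) => h2; lia.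
Qed.

Lemma Hform_dk n (c : 'I_n.+1 -> P) l s k : (forall j, 0 <= l j) ->
  valid l s k -> Hform h s c l = bary (dk c k) (wk l s).
Proof.
move=> l0 vk; apply: funext => x.
rewrite /Hform.
change (bary c (aw l s) x + bary (h \o c) (bw l s) x =
  \sum_(i < n.+1 + n.+1) (if `[< dk c k i = x >] then wk l s i else 0)).
rewrite /bary big_split_ord /=.
congr (_ + _); apply eq_bigr; move=> i _; rewrite /dk /wk.
  case: splitP => j /= Ej; last by have := ltn_ord i; lia.
  have -> : j = i by apply: ord_inj; lia.
  case: (leqP i k) => // ki; by rewrite (aw_after l0 vk ki); do 2 case: asboolP.
case: splitP => j /= Ej; first by have := ltn_ord j; lia.
have -> : j = i by apply: ord_inj; lia.
case: (leqP k i) => // ik; rewrite /bw (aw_before l0 vk ik) subrr /=.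
by do 2 case: asboolP.
Qed.

Lemma Hform_real n (c : 'I_n.+1 -> P) l s : chain_in C le c -> simplex n l ->
  0 <= s <= 1 -> realization C le (Hform h s c l).
Proof.
move=> ch sl s01; have [k vk] := valid_exists sl s01.
exists (n + n.+1), (dk c k), (wk l s); split.
- exact: dk_chain.
- exact: wk_simplex.
- by apply: Hform_dk => //; case: sl.
Qed.

Lemma Hform_0 n (c : 'I_n.+1 -> P) l : simplex n l -> Hform h 0 c l = bary (h \o c) l.
Proof.
move=> [l0 _]; apply: funext => x; rewrite /Hform /bary /bw.
rewrite big1 ?add0r; last by move=> i _; rewrite aw_s0 //; case: asboolP.
by apply: eq_bigr => i _; rewrite aw_s0 // subr0.
Qed.

Lemma Hform_1 n (c : 'I_n.+1 -> P) l : simplex n l -> Hform h 1 c l = bary c l.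
Proof.
move=> sl; apply: funext => x; rewrite /Hform /bary /bw.
rewrite [X in _ + X]big1 ?addr0; last by move=> i _; rewrite aw_s1 // subrr; case: asboolP.
by apply: eq_bigr => i _; rewrite aw_s1.
Qed.

End HomGeo.

Lemma fin_pos (T : finType) (Pk : T -> R -> Prop) :
  (forall k, exists2 d, 0 < d & Pk k d) ->
  (forall k d d', 0 < d' -> d' <= d -> Pk k d -> Pk k d') ->
  exists2 d, 0 < d & forall k, Pk k d.
Proof.
move=> H Hmono.
have : forall k, exists d, 0 < d /\ Pk k d by move=> k; have [d ? ?] := H k; exists d.
case/choice => f Hf.
pose S := \sum_k (f k)^-1.
have S0 : 0 <= S by apply: sumr_ge0 => k _; rewrite invr_ge0 ltW //; case: (Hf k).
exists (1 + S)^-1; first by rewrite invr_gt0; lra.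
move=> k; have [fk Pf] := Hf k; apply: (Hmono k (f k)) => //.
  by rewrite invr_gt0; lra.
have Sk : (f k)^-1 <= S.
  rewrite /S (bigD1 k) //= lerDl; apply: sumr_ge0 => j _.
  by rewrite invr_ge0 ltW //; case: (Hf j).
rewrite -[X in _ <= X]invrK lef_pV2 ?posrE ?invr_gt0 //; lra.
Qed.

Definition close n (d : R) (m l : 'I_n.+1 -> R) := forall j, `|m j - l j| < d.

Lemma sum_close n d (m l : 'I_n.+1 -> R) : close d m l ->
  \sum_j `|m j - l j| <= n.+1%:R * d.
Proof.
move=> cl; apply: le_trans (_ : \sum_(j < n.+1) d <= _).
  by apply: ler_sum => j _; apply: ltW.
by rewrite sumr_const card_ord mulr_natl.
Qed.

Lemma norm_le (x y : R) : `|x| <= y -> - y <= x /\ x <= y.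
Proof. by rewrite ler_norml => /andP. Qed.
Lemma norm_lt (x y : R) : `|x| < y -> - y < x /\ x < y.
Proof. by rewrite ltr_norml => /andP. Qed.

Lemma aw_close n (l m : 'I_n.+1 -> R) s s1 d i :
  (forall j, 0 <= l j) -> (forall j, 0 <= m j) -> `|s - s1| < d -> close d m l ->
  `|aw m s i - aw l s1 i| <= n.+3%:R * d.
Proof.
move=> l0 m0 ss cl; rewrite /aw.
apply: le_trans (@clamp_lip _ _ _ _ (m0 i) (l0 i)) _.
have d0 : 0 < d := le_lt_trans (normr_ge0 _) ss.
have Hz : `|s - LmN m i - (s1 - LmN l i)| <= n.+1%:R * d + d.
  have := LmN_lip l m i; have := sum_close cl; move: ss => /norm_lt [h6 h7] h3 h4.
  have /norm_le [h8 h9] := le_trans h4 h3.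
  rewrite ler_norml; apply/andP; split; lra.
have Hw := ltW (cl i).
apply: le_trans (lerD Hw Hz) _.
have -> : n.+3%:R = 2 + n.+1%:R :> R by rewrite -[n.+3]/(2 + n.+1)%N natrD.
rewrite mulrDl; clear; lra.
Qed.

Lemma bw_close n (l m : 'I_n.+1 -> R) s s1 d i :
  (forall j, 0 <= l j) -> (forall j, 0 <= m j) -> `|s - s1| < d -> close d m l ->
  `|bw m s i - bw l s1 i| <= n.+4%:R * d.
Proof.
move=> l0 m0 ss cl; rewrite /bw.
have d0 : 0 < d := le_lt_trans (normr_ge0 _) ss.
have /norm_le [h1 h2] := aw_close i l0 m0 ss cl.
have /norm_lt [h3 h4] := cl i.
have -> : n.+4%:R = 1 + n.+3%:R :> R by rewrite -[n.+4]/(1 + n.+3)%N natrD.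
rewrite ler_norml; apply/andP; split; lra.
Qed.

Lemma LmN_close n (l m : 'I_n.+1 -> R) d k : close d m l ->
  `|LmN m k - LmN l k| <= n.+1%:R * d.
Proof. by move=> cl; apply: le_trans (LmN_lip l m k) (sum_close cl). Qed.

Lemma frac_lt (a b e : R) : 0 < a -> a < b -> 0 < e -> a * (e / b) < e.
Proof.
move=> a0 ab e0; have b0 : 0 < b by lra.
rewrite mulrA ltr_pdivrMr //; nra.
Qed.

Lemma frac_eq (a g : R) : 0 < a -> a * (g / a) = g.
Proof. move=> a0; rewrite mulrC -mulrA mulVf ?mulr1 //; lra. Qed.

Section HOpen.
Variables (P : Type) (C : set P) (le : P -> P -> Prop).
Hypothesis le_anti : forall x y, le x y -> le y x -> x = y.
Hypothesis le_trans : forall x y z, le x y -> le y z -> le x z.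
Variable h : P -> P.
Hypothesis hC : forall x, C x -> C (h x).
Hypothesis hmono : forall x y, C x -> C y -> le x y -> le (h x) (h y).
Hypothesis hup : forall x, C x -> le x (h x).

Lemma Hopen (V : set (P -> R)) : weak_open C le V ->
  forall n (c : 'I_n.+1 -> P), chain_in C le c -> forall s1 l1,
  0 <= s1 <= 1 -> simplex n l1 -> V (Hform h s1 c l1) ->
  exists2 d, 0 < d & forall s m, 0 <= s <= 1 -> simplex n m ->
    `|s - s1| < d -> close d m l1 -> V (Hform h s c m).
Proof.
move=> [Vsub Vop] n c ch s1 l1 s01 sl1 Vh.
have l10 := sl1.1.
pose Pk k d := forall s m, 0 <= s <= 1 -> simplex n m -> `|s - s1| < d ->
  close d m l1 -> valid m s k -> V (Hform h s c m).
have [d d0 Hd] : exists2 d, 0 < d & forall k, Pk k d.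
  apply: fin_pos; last first.
    move=> k d d' d'0 dd H s m s01' sm ss cl; apply: H => //.
      exact: lt_le_trans dd.
    by move=> j; apply: lt_le_trans (cl j) dd.
  move=> k; case: (pselect (valid l1 s1 k)) => vk.
    rewrite (Hform_dk h c l10 vk) in Vh.
    have [|e e0 He] := Vop _ (dk h c k) (dk_chain le_trans hC hmono hup k ch) (wk l1 s1).
      by split => //; apply: wk_simplex.
    have n5 : 0 < n.+4.+1%:R :> R by rewrite ltr0n.
    exists (e / n.+4.+1%:R); first by rewrite divr_gt0.
    move=> s m s01' sm ss cl vm.
    have m0 := sm.1.
    rewrite (Hform_dk h c m0 vm).
    have [|//] := He (wk m s) (wk_simplex s sm).
    move=> j; rewrite /wk; case: split => i.
      apply: le_lt_trans (aw_close i l10 m0 ss cl) _.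
      by apply: frac_lt; rewrite ?ltr0n ?ltr_nat.
    apply: le_lt_trans (bw_close i l10 m0 ss cl) _.
    by apply: frac_lt; rewrite ?ltr0n ?ltr_nat.
  have n3 : 0 < n.+3%:R :> R by rewrite ltr0n.
  have E3 : n.+3%:R = 2 + n.+1%:R :> R by rewrite -[n.+3]/(2 + n.+1)%N natrD.
  case: (ltP s1 (LmN l1 k)) => h1.
    have [g Eg] : exists g, g = LmN l1 k - s1 by eexists.
    have g0 : 0 < g by rewrite Eg subr_gt0.
    have d0 : 0 < g / n.+3%:R by rewrite divr_gt0.
    have Ed : 2 * (g / n.+3%:R) + n.+1%:R * (g / n.+3%:R) = g by rewrite -mulrDl -E3 frac_eq.
    exists (g / n.+3%:R) => // s m _ _ ss cl [v1 v2].
    have /norm_le [a1 a2] := LmN_close k cl.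
    have /norm_lt [a3 a4] := ss.
    set d := g / n.+3%:R in Ed a1 a2 a3 a4 d0.
    set X := n.+1%:R * d in Ed a1 a2.
    exfalso; lra.
  have h2 : LmN l1 k + l1 k < s1.
    by rewrite ltNge; apply/negP => h2; apply: vk.
  have [g Eg] : exists g, g = s1 - (LmN l1 k + l1 k) by eexists.
  have g0 : 0 < g by rewrite Eg subr_gt0.
  have d0 : 0 < g / n.+3%:R by rewrite divr_gt0.
  have Ed : 2 * (g / n.+3%:R) + n.+1%:R * (g / n.+3%:R) = g by rewrite -mulrDl -E3 frac_eq.
  exists (g / n.+3%:R) => // s m _ _ ss cl [v1 v2].
  have /norm_le [a1 a2] := LmN_close k cl.
  have /norm_lt [a3 a4] := ss.
  have /norm_lt [a5 a6] := cl k.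
  set d := g / n.+3%:R in Ed a1 a2 a3 a4 a5 a6 d0.
  set X := n.+1%:R * d in Ed a1 a2.
  exfalso; lra.
exists d => // s m s01' sm ss cl; have [k vk] := valid_exists sm s01'.
exact: (Hd k).
Qed.

End HOpen.

Lemma tube (a b : R) (Z : R -> R -> Prop) :
  a <= b ->
  (forall s d d', 0 < d' -> d' <= d -> Z s d -> Z s d') ->
  (forall s, a <= s <= b -> exists2 d, 0 < d &
      forall s', a <= s' <= b -> `|s' - s| < d -> Z s' d) ->
  exists2 e, 0 < e & forall s', a <= s' <= b -> Z s' e.
Proof.
move=> ab Zmono H.
pose A := fun x : R => a <= x <= b /\ exists2 e, 0 < e & forall s', a <= s' <= x -> Z s' e.
have Aa : A a.
  split; first by apply/andP; split; lra.
  have [|d d0 Hd] := H a; first by apply/andP; split; lra.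
  exists d => // s' /andP[h1 h2]; have -> : s' = a by lra.
  by apply: Hd; [apply/andP; split; lra | rewrite subrr normr0].
have hs : has_sup A.
  split; first by exists a.
  by exists b => x [/andP[_ ?] _].
set sg := sup A.
have as_ : a <= sg by apply: sup_upper_bound.
have sb : sg <= b by apply: ge_sup; [exists a | move=> x [/andP[_ ?] _]].
have [|ds ds0 Hds] := H sg; first by apply/andP; split.
have [x Ax xs] := sup_adherent ds0 hs.
rewrite -/sg in xs.
have [/andP[ax xb] [ex ex0 Hex]] := Ax.
have xle : x <= sg by apply: sup_upper_bound.
pose e := Num.min ex ds.
have e0 : 0 < e by rewrite lt_min ex0 ds0.
have key : forall y, y <= b -> y <= sg + ds / 2 -> forall s', a <= s' <= y -> Z s' e.
  move=> y yb ys s' /andP[as' s'y].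
  case: (leP s' x) => sx.
    apply: (Zmono _ ex) => //; first by rewrite ge_min lexx.
    by apply: Hex; apply/andP.
  apply: (Zmono _ ds) => //; first by rewrite ge_min lexx orbT.
  apply: Hds; first by rewrite as' (le_trans s'y yb).
  rewrite ltr_norml; apply/andP; split; lra.
case: (leP b (sg + ds / 2)) => hb.
  by exists e => // s' /andP[h1 h2]; apply: (key b) => //; apply/andP.
have Ay : A (sg + ds / 2).
  split; first by apply/andP; split; lra.
  by exists e => //; apply: key => //; lra.
have := sup_upper_bound hs Ay; rewrite -/sg => ?; exfalso; lra.
Qed.

Section HomMain.
Variables (P : Type) (C : set P) (le : P -> P -> Prop).
Hypothesis le_anti : forall x y, le x y -> le y x -> x = y.
Hypothesis le_trans : forall x y z, le x y -> le y z -> le x z.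
Variable h : P -> P.
Hypothesis hC : forall x, C x -> C (h x).
Hypothesis hmono : forall x y, C x -> C y -> le x y -> le (h x) (h y).
Hypothesis hup : forall x, C x -> le x (h x).

Lemma hom_main : exists H, homotopy_cont C le C le H /\
  forall t, realization C le t -> H 0 t = pf h t /\ H 1 t = t.
Proof.
exists (Homt C le h); split; last first.
  move=> t [n [c [l [ch sl ->]]]]; rewrite !(Hom_bary le_anti) // pf_bary.
  by rewrite Hform_0 // Hform_1.
split.
  move=> s t s01 [n [c [l [ch sl ->]]]]; rewrite (Hom_bary le_anti) //.
  exact: Hform_real.
move=> V Vw; split; first by move=> s t [].
move=> s0 t0 [s01 [n0 [c0 [l0 [ch0 sl0 E0]]]] V0].
subst t0; rewrite (Hom_bary le_anti) // in V0.
have [d0 d00 Hd0] := Hopen le_trans hC hmono hup Vw ch0 s01 sl0 V0.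
have e0 : 0 < d0 / 2 by rewrite divr_gt0.
exists (d0 / 2) => //.
exists (fun t => realization C le t /\ forall s', 0 <= s' <= 1 -> `|s' - s0| <= d0 / 2 ->
                  V (Homt C le h s' t)).
split.
- split; first by move=> t [].
  move=> n c ch l1 [sl1 [_ Hl1]].
  pose a := Num.max 0 (s0 - d0 / 2); pose b := Num.min 1 (s0 + d0 / 2).
  have /andP[s00 s10] := s01.
  have inI : forall s, (a <= s <= b) = (0 <= s <= 1) && (`|s - s0| <= d0 / 2).
    move=> s; rewrite /a /b ge_max le_min ler_norml.
    apply/idP/idP.
      by move=> /andP[/andP[h1 h2] /andP[h3 h4]]; rewrite h1 h3 /=; apply/andP; split; lra.
    by move=> /andP[/andP[h1 h3] /andP[h2 h4]]; rewrite h1 h3 /=; apply/andP; split; lra.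
  pose Z := fun s'' dd => forall m, simplex n m -> close dd m l1 -> V (Hform h s'' c m).
  have H1 : a <= b.
    rewrite /a /b ge_max !le_min; apply/andP; split; apply/andP; split; lra.
  have H2 : forall s dd dd', 0 < dd' -> dd' <= dd -> Z s dd -> Z s dd'.
    move=> s dd dd' _ ddd H m sm cl; apply: H => // j; exact: lt_le_trans (cl j) ddd.
  have H3 : forall s, a <= s <= b -> exists2 dd, 0 < dd &
      forall s', a <= s' <= b -> `|s' - s| < dd -> Z s' dd.
    move=> s; rewrite inI => /andP[s01' ss].
    have := Hl1 s s01' ss; rewrite (Hom_bary le_anti) // => Vs.
    have [dd dd0 Hdd] := Hopen le_trans hC hmono hup Vw ch s01' sl1 Vs.
    exists dd => // s' ; rewrite inI => /andP[s01'' _] sd m sm cl.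
    exact: Hdd.
  have [e ee0 He] := tube H1 H2 H3.
  exists e => // m sm cl; split => //; split; first by exists n, c, m.
  move=> s' s01' ss; rewrite (Hom_bary le_anti) //.
  by apply: He => //; rewrite inI s01' ss.
- split; first by exists n0, c0, l0.
  move=> s' s01' ss; rewrite (Hom_bary le_anti) //.
  apply: Hd0 => //; [lra | move=> j; rewrite subrr normr0 //].
- move=> s' t' s01' ss [rt Ot]; split => //.
  by apply: Ot => //; apply: ltW.
Qed.

End HomMain.

Section Val.
Variables (K : fieldType) (v : K -> int).
Hypothesis vmul : forall x y : K, x != 0 -> y != 0 -> v (x * y) = v x + v y.
Hypothesis vadd : forall x y : K, x != 0 -> y != 0 -> x + y != 0 ->
          Num.min (v x) (v y) <= v (x + y).

Lemma v1 : v 1 = 0.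
Proof.
have E : v 1 = v 1 + v 1 by have := vmul (oner_neq0 K) (oner_neq0 K); rewrite mulr1.
lia.
Qed.

Lemma vinv x : x != 0 -> v x^-1 = - v x.
Proof.
move=> x0; have E : v 1 = v x^-1 + v x by rewrite -(mulVf x0) vmul // invr_neq0.
rewrite v1 in E; lia.
Qed.

Lemma vdiv x y : x != 0 -> y != 0 -> v (x / y) = v x - v y.
Proof. by move=> x0 y0; rewrite vmul ?invr_neq0 // vinv. Qed.

Lemma vN1 : v (-1) = 0.
Proof.
have n1 : (-1 : K) != 0 by rewrite oppr_eq0 oner_neq0.
have E : v 1 = v (-1) + v (-1) by rewrite -vmul // mulrNN mulr1.
rewrite v1 in E; lia.
Qed.

Lemma vN x : x != 0 -> v (- x) = v x.
Proof.
move=> x0; rewrite -mulN1r vmul ?vN1 ?add0r //; by rewrite oppr_eq0 oner_neq0.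
Qed.

Lemma O0 : in_O v 0. Proof. by left. Qed.
Lemma O1 : in_O v 1. Proof. by right; rewrite v1. Qed.
Lemma ON1 : in_O v (-1). Proof. by right; rewrite vN1. Qed.

Lemma OM a b : in_O v a -> in_O v b -> in_O v (a * b).
Proof.
case=> [->|ha]; first by rewrite mul0r; left.
case=> [->|hb]; first by rewrite mulr0; left.
have [a0|a0] := eqVneq a 0; first by rewrite a0 mul0r; left.
have [b0|b0] := eqVneq b 0; first by rewrite b0 mulr0; left.
by right; rewrite vmul //; lia.
Qed.

Lemma OD a b : in_O v a -> in_O v b -> in_O v (a + b).
Proof.
case=> [->|ha]; first by rewrite add0r.
case=> [->|hb]; first by rewrite addr0; right.
have [a0|a0] := eqVneq a 0; first by rewrite a0 add0r; right.
have [b0|b0] := eqVneq b 0; first by rewrite b0 addr0; right.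
have [ab|ab] := eqVneq (a + b) 0; first by rewrite ab; left.
right; apply: le_trans (vadd a0 b0 ab); rewrite le_min ha hb //.
Qed.

Lemma ON a : in_O v a -> in_O v (- a).
Proof. by move=> ha; rewrite -mulN1r; apply: OM => //; apply: ON1. Qed.

Lemma Odiv a b : a != 0 -> b != 0 -> v b <= v a -> in_O v (a / b).
Proof. by move=> a0 b0 ab; right; rewrite vdiv //; lia. Qed.

Lemma vexp (p : K) n : p != 0 -> v (p ^+ n) = (v p) *+ n.
Proof.
move=> p0; elim: n => [|n IH]; first by rewrite expr0 v1.
by rewrite exprS vmul ?expf_neq0 // IH mulrS.
Qed.

End Val.

Section Gen.
Variables (K : fieldType) (v : K -> int).
Hypothesis vmul : forall x y : K, x != 0 -> y != 0 -> v (x * y) = v x + v y.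
Hypothesis vadd : forall x y : K, x != 0 -> y != 0 -> x + y != 0 ->
          Num.min (v x) (v y) <= v (x + y).

Definition submod N (M : set 'rV[K]_N) :=
  [/\ M 0, (forall x y, M x -> M y -> M (x + y)),
      (forall a x, in_O v a -> M x -> M (a *: x)) &
      (forall x, M x -> forall i, in_O v (x 0 i))].

Lemma comb_in N (M : set 'rV[K]_N) r (g : 'I_r -> 'rV[K]_N) (a : 'I_r -> K) :
  submod M -> (forall i, M (g i)) -> (forall i, in_O v (a i)) -> M (\sum_i a i *: g i).
Proof.
move=> [M0 MD MZ _] Mg Oa; apply: (big_ind M) => // i _; exact: MZ.
Qed.

Lemma gen_lemma N r : forall (M : set 'rV[K]_N) (J : 'I_r -> 'I_N),
  submod M -> (forall x, M x -> (forall i, x 0 (J i) = 0) -> x = 0) ->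
  exists g : 'I_r -> 'rV[K]_N, (forall i, M (g i)) /\
    forall u, M u -> exists a : 'I_r -> K, (forall i, in_O v (a i)) /\ u = \sum_i a i *: g i.
Proof.
elim: r => [|r IH] M J sM HJ.
  exists (fun _ => 0); split; first by move=> [].
  move=> u Mu; exists (fun _ => 0); split; first by move=> [].
  by rewrite big_ord0; apply: HJ => // [[]].
have [M0 MD MZ ML] := sM.
pose j0 := J ord_max.
pose M' := fun x => M x /\ x 0 j0 = 0.
have sM' : submod M'.
  split.
  - by split => //; rewrite mxE.
  - by move=> x y [Mx x0] [My y0]; split; [apply: MD | rewrite mxE x0 y0 addr0].
  - by move=> a x Oa [Mx x0]; split; [apply: MZ | rewrite mxE x0 mulr0].
  - by move=> x [Mx _]; apply: ML.
have [g' [Mg' Hg']] := IH M' (fun i => J (lift ord_max i)) sM'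
  (fun x Mx Hx => HJ x Mx.1 (fun i => match unliftP ord_max i with
                                     | UnliftSome i' E => ltac:(rewrite E; exact: Hx i')
                                     | UnliftNone E => ltac:(rewrite E; exact: Mx.2) end)).
have Ew : forall i : 'I_r, widen_ord (leqnSn r) i = lift ord_max i.
  by move=> i; apply: val_inj; exact: (esym (lift_max i)).
have sumE : forall (a : 'I_r.+1 -> K) (G : 'I_r.+1 -> 'rV[K]_N),
    \sum_i a i *: G i = \sum_(i < r) a (lift ord_max i) *: G (lift ord_max i) + a ord_max *: G ord_max.
  by move=> a G; rewrite big_ord_recr /=; congr (_ + _); apply: eq_bigr => i _; rewrite Ew.
pose ext (A : Type) (f : 'I_r -> A) (z : A) (i : 'I_r.+1) :=
  match unlift ord_max i with Some i' => f i' | None => z end.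
have extL : forall A f z i, @ext A f z (lift ord_max i) = f i by move=> *; rewrite /ext liftK.
have extM : forall A f z, @ext A f z ord_max = z by move=> *; rewrite /ext unlift_none.
case: (pselect (exists x, M x /\ x 0 j0 != 0)) => [[x [Mx xj]]|NB].
  pose Q := fun k : nat => exists y, [/\ M y, y 0 j0 != 0 & v (y 0 j0) = k%:Z].
  have exQ : exists k, Q k.
    exists (absz (v (x 0 j0))); exists x; split => //.
    case: (ML x Mx j0) => [E|]; first by rewrite E eqxx in xj.
    by move=> h; rewrite gez0_abs.
  have exQ' : exists k, `[< Q k >] by case: exQ => k Qk; exists k; apply/asboolP.
  case: (ex_minnP exQ') => m /asboolP [xs [Mxs xsj vxs]] mmin.
  exists (ext _ g' xs); split.
    by move=> i; rewrite /ext; case: (unlift ord_max i) => [i'|] //; case: (Mg' i').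
  move=> u Mu.
  pose al := u 0 j0 / xs 0 j0.
  have Oal : in_O v al.
    case: (eqVneq (u 0 j0) 0) => [E|uj]; first by rewrite /al E mul0r; apply: O0.
    apply: Odiv => //.
    have Qu : `[< Q (absz (v (u 0 j0))) >].
      apply/asboolP; exists u; split => //.
      case: (ML u Mu j0) => [E|]; first by rewrite E eqxx in uj.
      by move=> h; rewrite gez0_abs.
    have := mmin _ Qu.
    case: (ML u Mu j0) => [E|h]; first by rewrite E eqxx in uj.
    rewrite vxs; lia.
  have Mu' : M' (u + (- al) *: xs).
    split; first by apply: MD => //; apply: MZ => //; apply: ON.
    by rewrite !mxE mulNr divfK // subrr.
  have [a' [Oa' Ea']] := Hg' _ Mu'.
  exists (ext _ a' al); split.
    by move=> i; rewrite /ext; case: (unlift ord_max i) => [i'|] //.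
  rewrite sumE extM; under eq_bigr do rewrite !extL.
  by rewrite -Ea' scaleNr extM subrK.
exists (ext _ g' 0); split.
  by move=> i; rewrite /ext; case: (unlift ord_max i) => [i'|] //; case: (Mg' i').
move=> u Mu.
have Mu' : M' u.
  split => //; apply/eqP; apply: contrapT => uj; apply: NB; exists u; split => //; exact/negP.
have [a' [Oa' Ea']] := Hg' _ Mu'.
exists (ext _ a' 0); split.
  by move=> i; rewrite /ext; case: (unlift ord_max i) => [i'|] //; apply: O0.
rewrite sumE !extM scaler0 addr0; under eq_bigr do rewrite !extL.
exact: Ea'.
Qed.

End Gen.

Lemma fin_argmin (I : finType) (P : pred I) (F : I -> int) i0 : P i0 ->
  exists j, P j /\ forall i, P i -> F j <= F i.
Proof.
move=> Pi0.
have := @extremumP _ I <=%R i0 P F lexx (@le_trans _ _) le_total Pi0.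
by case=> j Pj Hj; exists j.
Qed.

Section PAdic.
Variables (K : fieldType) (v : K -> int) (pi : K) (d : nat).
Hypothesis vmul : forall x y : K, x != 0 -> y != 0 -> v (x * y) = v x + v y.
Hypothesis vadd : forall x y : K, x != 0 -> y != 0 -> x + y != 0 ->
          Num.min (v x) (v y) <= v (x + y).
Hypothesis pi0 : pi != 0.
Hypothesis vpi : v pi = 1.

Definition spanK (U : set 'rV[K]_d.+1) : set 'rV[K]_d.+1 :=
  fun x => exists a : K, a != 0 /\ U (a *: x).

Lemma rv_nz (w : 'rV[K]_d.+1) : w != 0 -> exists j, w 0 j != 0.
Proof.
move=> w0; apply: contrapT => H; move/eqP: w0; apply; apply/rowP => j.
rewrite mxE; apply: contrapT => wj; apply: H; exists j; exact/eqP.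
Qed.

Lemma psi_sub W : TK K d W -> submod v (psi v W).
Proof.
move=> [[W0 WD WZ] _ _]; split.
- by split => // i; rewrite mxE; apply: O0.
- move=> x y [Wx Lx] [Wy Ly]; split; first exact: WD.
  by move=> i; rewrite mxE; apply: OD.
- move=> a x Oa [Wx Lx]; split; first exact: WZ.
  by move=> i; rewrite mxE; apply: OM.
- by move=> x [_ Lx].
Qed.

Lemma psi_TO W : TK K d W -> TO v pi d (psi v W).
Proof.
move=> TW; have sW := psi_sub TW; have [[W0 WD WZ] [w [Ww w0]] [x0 Wx0]] := TW.
have [M0 MD MZ ML] := sW.
split.
- by split.
- by move=> x [].
- have [j0 wj0] := rv_nz w0.
  have [j [wj Hj]] := @fin_argmin _ (fun i => w 0 i != 0) (fun i => v (w 0 i)) j0 wj0.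
  pose w' := (w 0 j)^-1 *: w.
  have Lw' : Lattice v d w'.
    move=> i; rewrite mxE; case: (eqVneq (w 0 i) 0) => [->|wi]; first by rewrite mulr0; apply: O0.
    by rewrite mulrC; apply: Odiv => //; apply: Hj.
  move=> H; have [z [Lz Ez]] := H w' (conj (WZ _ _ Ww) Lw').
  have : (1 : K) = pi * z 0 j.
    by have := congr1 (fun m : 'rV[K]_d.+1 => m 0 j) Ez; rewrite /= !mxE mulVf.
  move=> E1.
  have zj : z 0 j != 0 by apply: contra_eq_neq E1 => ->; rewrite mulr0 oner_neq0.
  have := congr1 v E1; rewrite vmul // v1 // vpi.
  case: (Lz j) => [E|hz]; first by rewrite E eqxx in zj.
  lia.
- have [j nWj] : exists j, ~ W (delta_mx 0 j).
    apply: contrapT => H; apply: Wx0; rewrite (row_sum_delta x0).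
    apply: (big_ind W) => // i _; apply: WZ; apply: contrapT => Hn; apply: H; by exists i.
  have HJ : forall x, psi v W x -> (forall i : 'I_d, x 0 (lift j i) = 0) -> x = 0.
    move=> x [Wx Lx] Hx.
    have Ex : x = x 0 j *: delta_mx 0 j.
      apply/rowP => k; rewrite !mxE eqxx /=.
      case: (unliftP j k) => [i ->|->]; last by rewrite eqxx mulr1.
      by rewrite Hx; have := neq_lift j i; rewrite eq_sym => /negbTE ->; rewrite mulr0.
    case: (eqVneq (x 0 j) 0) => [xj|xj]; first by rewrite Ex xj scale0r.
    exfalso; apply: nWj.
    have -> : delta_mx 0 j = (x 0 j)^-1 *: x by rewrite {2}Ex scalerA mulVf // scale1r.
    exact: WZ.
  have [g [Mg Hg]] := gen_lemma vmul sW HJ.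
  exists g; apply/funext => u; apply/propext; split; first exact: Hg.
  by move=> [a [Oa ->]]; apply: comb_in => //.
Qed.

End PAdic.

Section PAdic2.
Variables (K : fieldType) (v : K -> int) (pi : K) (d : nat).
Hypothesis vmul : forall x y : K, x != 0 -> y != 0 -> v (x * y) = v x + v y.
Hypothesis vadd : forall x y : K, x != 0 -> y != 0 -> x + y != 0 ->
          Num.min (v x) (v y) <= v (x + y).
Hypothesis pi0 : pi != 0.
Hypothesis vpi : v pi = 1.

Lemma span_TK U : TO v pi d U -> TK K d (spanK U).
Proof.
move=> [[U0 UD UZ] UL UnP [g Eg]].
split.
- split.
  + by exists 1; rewrite oner_neq0 scaler0.
  + move=> x y [a [a0 Ua]] [b [b0 Ub]].
    case: (leP (v b) (v a)) => hab.
      exists a; split => //; rewrite scalerDr; apply: UD => //.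
      have -> : a *: y = (a / b) *: (b *: y) by rewrite scalerA divfK.
      by apply: UZ => //; apply: Odiv.
    exists b; split => //; rewrite scalerDr; apply: UD => //.
    have -> : b *: x = (b / a) *: (a *: x) by rewrite scalerA divfK.
    by apply: UZ => //; apply: Odiv => //; apply: ltW.
  + move=> k x [a [a0 Ua]].
    case: (eqVneq k 0) => [->|k0]; first by exists 1; rewrite oner_neq0 scale0r scaler0.
    exists (a / k); split; first by rewrite mulf_neq0 ?invr_neq0.
    by rewrite scalerA divfK.
- have [u [Uu nu]] : exists u, U u /\ ~ (exists w, Lattice v d w /\ u = pi *: w).
    apply: contrapT => H; apply: UnP => u Uu; apply: contrapT => nu; apply: H; by exists u.
  exists u; split; first by exists 1; rewrite oner_neq0 scale1r.
  apply/eqP => u0; apply: nu; exists 0; split; last by rewrite u0 scaler0.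
  by move=> i; rewrite mxE; apply: O0.
- pose G : 'M[K]_(d, d.+1) := \matrix_(i, j) g i 0 j.
  have rowG : forall i, row i G = g i by move=> i; apply/rowP => j; rewrite !mxE.
  have [x nx] : exists x : 'rV[K]_d.+1, ~~ (x <= G)%MS.
    apply: contrapT => H.
    have : (1%:M <= G)%MS.
      apply/row_subP => i; apply: contrapT => /negP Hn; apply: H; by exists (row i 1%:M).
    move/mxrankS; rewrite mxrank1 => Hr.
    have := rank_leq_row G; lia.
  exists x => [[a [a0 Ua]]]; apply: (negP nx).
  have : (a *: x <= G)%MS.
    rewrite Eg in Ua; case: Ua => c [_ ->].
    apply: summx_sub => i _; apply: scalemx_sub; rewrite -rowG; exact: row_sub.
  move/(scalemx_sub a^-1); rewrite scalerA mulVf // scale1r //.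
Qed.

Lemma span_psi W : TK K d W -> spanK (psi v W) = W.
Proof.
move=> [[W0 WD WZ] _ _]; apply/funext => x; apply/propext; split.
  move=> [a [a0 [Wax _]]].
  have -> : x = a^-1 *: (a *: x) by rewrite scalerA mulVf // scale1r.
  exact: WZ.
move=> Wx.
pose f := fun i : 'I_d.+1 => absz (v (x 0 i)).
pose N := (\sum_i f i)%N.
exists (pi ^+ N); split; first by rewrite expf_neq0.
split; first exact: WZ.
have vN : v (pi ^+ N) = N%:Z.
  elim: N => [|n IH]; first by rewrite expr0 v1.
  rewrite exprS vmul ?expf_neq0 // IH vpi; lia.
move=> i; rewrite mxE.
case: (eqVneq (x 0 i) 0) => [->|xi]; first by rewrite mulr0; apply: O0.
right; rewrite vmul ?expf_neq0 // vN.
have : (f i <= N)%N by rewrite /N (bigD1 i) //= leq_addr.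
rewrite /f -(lez_nat) => h1.
have h2 := ler_norm (- v (x 0 i)); rewrite normrN -abszE in h2.
have h := le_trans h2 h1; by rewrite -subr_ge0 opprK in h.
Qed.

Lemma psi_span_up U : TO v pi d U -> U `<=` psi v (spanK U).
Proof.
move=> [_ UL _ _] u Uu; split; last exact: UL.
by exists 1; rewrite oner_neq0 scale1r.
Qed.

End PAdic2.

Close Scope classical_set_scope.

Theorem mainTheorem12 (K : fieldType) (v : K -> int) (pi : K) (d : nat) :
  p_adic_field v -> pi != 0 -> v pi = 1 ->
  exists F : (set 'rV[K]_d.+1 -> R) -> (set 'rV[K]_d.+1 -> R),
    (forall (n : nat) (c : 'I_n.+1 -> set 'rV[K]_d.+1) (l : 'I_n.+1 -> R),
        chain_in (TK K d) (@incl _) c -> simplex n l ->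
        F (bary c l) = bary ((fun W => psi v W) \o c) l) /\
    homotopy_equivalence (TK K d) (@incl _) (TO v pi d) (@incl _) F.
Proof.
move=> [[vmul vadd _] _ _ _] pi0 vpi.
exists (pf (fun W => psi v W)); split.
  by move=> n c l _ _; rewrite pf_bary.
have chain_psi : forall n (c : 'I_n.+1 -> set 'rV[K]_d.+1),
    chain_in (TK K d) (@incl _) c ->
    chain_in (TO v pi d) (@incl _) ((fun W => psi v W) \o c).
  move=> n c [cC ch]; split => [i|i j ij]; first by apply: (psi_TO vmul vadd pi0 vpi); apply: cC.
  by move=> x [cix Lx]; split => //; apply: (ch i j ij).
have chain_span : forall n (c : 'I_n.+1 -> set 'rV[K]_d.+1),
    chain_in (TO v pi d) (@incl _) c ->
    chain_in (TK K d) (@incl _) ((@spanK K d) \o c).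
  move=> n c [cC ch]; split => [i|i j ij]; first by apply: (span_TK vmul pi0 vpi); apply: cC.
  by move=> x [a [a0 Ua]]; exists a; split => //; apply: (ch i j ij).
split; first exact: induced_real_cont.
exists (pf (@spanK K d)); split.
- exact: induced_real_cont.
- exists (fun (s : R) t => t); split.
    split; first by move=> s t _.
    move=> V [Vsub Vop]; split; first by move=> s t [].
    move=> s t [s01 rt Vt]; exists 1 => //; exists V; split => //.
    move=> s' t' s01' _ Vt'; split => //; exact: Vsub.
  move=> t [n [c [l [ch sl ->]]]]; split => //=.
  rewrite !pf_bary; congr bary; apply/funext => i /=.
  by symmetry; apply: (span_psi vmul pi0 vpi); case: ch => cC _; apply: cC.
- have le_anti : forall x y : set 'rV[K]_d.+1, incl x y -> incl y x -> x = y.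
    by move=> x y h1 h2; rewrite eqEsubset.
  have le_tr : forall x y z : set 'rV[K]_d.+1, incl x y -> incl y z -> incl x z.
    by move=> x y z h1 h2 u /h1 /h2.
  have [H [Hc Hend]] := @hom_main _ (TO v pi d) (@incl _) le_anti le_tr
     (fun U => psi v (@spanK K d U))
     (fun U TU => psi_TO vmul vadd pi0 vpi (span_TK vmul pi0 vpi TU))
     (fun U U' _ _ UU' x => fun '(conj sx Lx) => conj (let: ex_intro a (conj a0 Ua) := sx in ex_intro _ a (conj a0 (UU' _ Ua))) Lx)
     (fun U TU => psi_span_up TU).
  exists H; split => // t rt; have [H0 H1] := Hend t rt; split => //.
  rewrite H0; case: rt => n [c [l [ch sl ->]]]; by rewrite /= !pf_bary.
Qed.
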